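(* Let $(G,\mathcal{P})$ and $(H,\mathcal{Q})$ be group pairs. If $(G,\mathcal{P})$ is a quasi-retract of $(H,\mathcal{Q})$ and $(H,\mathcal{Q})$ is relatively finitely presented, then $(G,\mathcal{P})$ is relatively finitely presented.
   Context: A group pair $(G,\mathcal{P})$ consists of a finitely generated group $G$ and a non-empty finite collection $\mathcal{P}$ of subgroups (repetitions allowed); $G/\mathcal{P}=\coprod_{P\in\mathcal{P}}G/P$, viewed as the collection of cosets regarded as subsets of $G$. For $S\subseteq G$ let $\varphi\colon F(S)*\mathop{\ast}_{P\in\mathcal{P}}P\to G$ be induced by inclusions. $S$ is a relative generating set if $\varphi$ is surjective; a relative presentation $\langle S,\mathcal{P}\mid R\rangle$ consists of a relative generating set $S$ and a subset $R$ of the free product normally generating $\ker\varphi$; $(G,\mathcal{P})$ is relatively finitely presented if there is one with $S,R$ finite. Groups carry word metrics for finite generating sets; $f$ is $(L,C)$-Lipschitz if $d(f(x),f(x'))\le L\,d(x,x')+C$. For $L\ge1,C\ge0,M\ge0$, an $(L,C,M)$-Lipschitz map of pairs $f=(f_1,f_2)\colon(G,\mathcal{P})\to(H,\mathcal{Q})$ is an $(L,C)$-Lipschitz $f_1\colon G\to H$ with a function $f_2\colon G/\mathcal{P}\to H/\mathcal{Q}$ such that the Hausdorff distance between $f_1(A)$ and $f_2(A)$ is $<M$ for all $A\in G/\mathcal{P}$. An $(L,C,M)$-quasi-retraction of pairs $(f,r)$ consists of such $f\colon(G,\mathcal{P})\to(H,\mathcal{Q})$ and $r\colon(H,\mathcal{Q})\to(G,\mathcal{P})$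 with $d_G(r_1f_1(g),g)\le C$ for all $g$ and $r_2\circ f_2=\mathrm{id}$. $(G,\mathcal{P})$ is a quasi-retract of $(H,\mathcal{Q})$ if such $(f,r)$ exists for some constants. *)

(* Defs.v *)
From Stdlib Require Import List Arith Lia.
Import ListNotations.

Set Implicit Arguments.
Unset Strict Implicit.

Record Group := {
  carrier :> Type;
  gmul : carrier -> carrier -> carrier;
  gone : carrier;
  ginv : carrier -> carrier;
  gmul_assoc : forall x y z, gmul x (gmul y z) = gmul (gmul x y) z;
  gmul_1l : forall x, gmul gone x = x;
  gmul_1r : forall x, gmul x gone = x;
  gmul_Vl : forall x, gmul (ginv x) x = gone;
  gmul_Vr : forall x, gmul x (ginv x) = gone
}.

Arguments gmul {g} _ _.
Arguments gone {g}.
Arguments ginv {g} _.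

Definition is_subgroup (G : Group) (P : G -> Prop) : Prop :=
  P gone /\ (forall x y, P x -> P y -> P (gmul x y)) /\ (forall x, P x -> P (ginv x)).

Definition sgn_val (G : Group) (x : G) (b : bool) : G := if b then x else ginv x.
Arguments sgn_val {G} _ _.

Fixpoint prod_list {G : Group} (l : list (G * bool)) : G :=
  match l with
  | [] => gone
  | (x, b) :: l' => gmul (sgn_val x b) (prod_list l')
  end.

Definition word_len_le (G : Group) (S : list G) (x : G) (n : nat) : Prop :=
  exists l : list (G * bool),
    length l <= n /\ (forall y b, In (y, b) l -> In y S) /\ prod_list l = x.

Definition generates (G : Group) (S : list G) : Prop :=
  forall g : G, exists n, word_len_le S g n.

Definition finitely_generated (G : Group) : Prop :=
  exists S : list G, generates S.

Definition dist_le (G : Group) (S : list G) (x y : G) (n : nat) : Prop :=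
  word_len_le S (gmul (ginv x) y) n.

Definition dist_lt (G : Group) (S : list G) (x y : G) (M : nat) : Prop :=
  exists k, k < M /\ dist_le S x y k.

(** * Group pairs
    [P i] for [i < npar] is the finite, non-empty, indexed collection of
    subgroups (repetitions allowed). *)
Record GroupPair := {
  gp_grp :> Group;
  gp_n : nat;
  gp_sub : nat -> gp_grp -> Prop;
  gp_fg : finitely_generated gp_grp;
  gp_nonempty : 0 < gp_n;
  gp_subgroups : forall i, i < gp_n -> is_subgroup (gp_sub i)
}.

Arguments gp_sub : clear implicits.
Arguments gp_n : clear implicits.

(** Elements of [G/𝒫 = ⊔_{i} G/P_i] are represented by pairs [(i, g)]
    standing for the coset [g P_i] in the [i]-th summand. *)
Definition coset_rep (X : GroupPair) : Type := (nat * X)%type.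

Definition valid_coset (X : GroupPair) (c : coset_rep X) : Prop := fst c < gp_n X.

Definition same_coset (X : GroupPair) (c d : coset_rep X) : Prop :=
  fst c = fst d /\ gp_sub X (fst c) (gmul (ginv (snd c)) (snd d)).

(** * Lipschitz maps of pairs.
    [(L,C,M)]-Lipschitz map of pairs w.r.t. the word metrics of the finite
    generating sets [SX], [SY].  [f2] is a function on cosets, given on
    representatives and required to be well defined. *)
Definition lipschitz_map_of_pairs (X Y : GroupPair) (SX : list X) (SY : list Y)
    (L C M : nat) (f1 : X -> Y) (f2 : coset_rep X -> coset_rep Y) : Prop :=
  (forall x x' n, dist_le SX x x' n -> dist_le SY (f1 x) (f1 x') (L * n + C)) /\
  (forall c, valid_coset c -> valid_coset (f2 c)) /\
  (forall c d, valid_coset c -> same_coset c d -> same_coset (f2 c) (f2 d)) /\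
  (* Hausdorff distance between f1(A) and f2(A) is < M *)
  (forall c, valid_coset c ->
     (forall p, gp_sub X (fst c) p ->
        exists q, gp_sub Y (fst (f2 c)) q /\
          dist_lt SY (f1 (gmul (snd c) p)) (gmul (snd (f2 c)) q) M) /\
     (forall q, gp_sub Y (fst (f2 c)) q ->
        exists p, gp_sub X (fst c) p /\
          dist_lt SY (f1 (gmul (snd c) p)) (gmul (snd (f2 c)) q) M)).

Definition quasi_retract (X Y : GroupPair) : Prop :=
  exists (SX : list X) (SY : list Y) (L C M : nat)
         (f1 : X -> Y) (f2 : coset_rep X -> coset_rep Y)
         (r1 : Y -> X) (r2 : coset_rep Y -> coset_rep X),
    generates SX /\ generates SY /\ 1 <= L /\
    lipschitz_map_of_pairs SX SY L C M f1 f2 /\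
    lipschitz_map_of_pairs SY SX L C M r1 r2 /\
    (forall g : X, dist_le SX (r1 (f1 g)) g C) /\
    (forall c, valid_coset c -> same_coset (r2 (f2 c)) c).

(** * Relative presentations.
    The free product [F(S) * *_{P∈𝒫} P] is the free group on the alphabet
    [S ⊔ ⊔_i P_i] modulo the multiplication tables of the [P_i]. *)
Inductive letter (G : Group) : Type :=
  | LS : G -> letter G
  | LP : nat -> G -> letter G.

Arguments LS {G} _.
Arguments LP {G} _ _.

Definition word (G : Group) : Type := list (letter G * bool).

Definition valid_letter (X : GroupPair) (S : list X) (a : letter X) : Prop :=
  match a with
  | LS s => In s S
  | LP i p => i < gp_n X /\ gp_sub X i p
  end.

Definition valid_word (X : GroupPair) (S : list X) (w : word X) : Prop :=
  forall a b, In (a, b) w -> valid_letter S a.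

Definition letter_val {G : Group} (a : letter G) : G :=
  match a with LS s => s | LP _ p => p end.

Fixpoint phi {G : Group} (w : word G) : G :=
  match w with
  | [] => gone
  | (a, b) :: w' => gmul (sgn_val (letter_val a) b) (phi w')
  end.

(** Consequence relation: the congruence on words generated by free
    cancellation of valid letters and by the relators [Rel]; a word is in the
    normal closure of [Rel] in the free group iff it is related to [[]]. *)
Inductive conseq (G : Group) (vl : letter G -> Prop) (Rel : word G -> Prop)
  : word G -> word G -> Prop :=
  | cq_refl : forall w, conseq vl Rel w w
  | cq_sym : forall u v, conseq vl Rel u v -> conseq vl Rel v u
  | cq_trans : forall u v w, conseq vl Rel u v -> conseq vl Rel v w -> conseq vl Rel u w
  | cq_cancel : forall u v a b, vl a ->
      conseq vl Rel (u ++ (a, b) :: (a, negb b) :: v) (u ++ v)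
  | cq_rel : forall u v r, Rel r -> conseq vl Rel (u ++ r ++ v) (u ++ v).

Definition table_rel (X : GroupPair) (w : word X) : Prop :=
  exists i p q, i < gp_n X /\ gp_sub X i p /\ gp_sub X i q /\
    w = [(LP i p, true); (LP i q, true); (LP i (gmul p q), false)].

Definition relative_presentation (X : GroupPair) (S : list X) (R : list (word X)) : Prop :=
  (forall g : X, exists w, valid_word S w /\ phi w = g) /\
  (forall r, In r R -> valid_word S r) /\
  (forall w, valid_word S w ->
     (phi w = gone <->
      conseq (valid_letter S) (fun r => In r R \/ table_rel r) w [])).

Definition rel_fin_presented (X : GroupPair) : Prop :=
  exists (S : list X) (R : list (word X)), relative_presentation S R.

(* Main.v *)
Require Import Defs.
From Stdlib Require Import List Arith Lia Classical ClassicalEpsilon.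
Import ListNotations.
Set Implicit Arguments.

(** * Generic group facts *)
Section GroupFacts.
Variable G : Group.
Implicit Types a b c : G.

Lemma gmul_assocr a b c : gmul (gmul a b) c = gmul a (gmul b c).
Proof. now rewrite gmul_assoc. Qed.

Lemma mulKV a b : gmul a (gmul (ginv a) b) = b.
Proof. now rewrite gmul_assoc, gmul_Vr, gmul_1l. Qed.

Lemma mulVK a b : gmul (ginv a) (gmul a b) = b.
Proof. now rewrite gmul_assoc, gmul_Vl, gmul_1l. Qed.

Lemma mul_cancel_l a b c : gmul a b = gmul a c -> b = c.
Proof. intro H. rewrite <- (mulVK a b), H. apply mulVK. Qed.

Lemma inv_unique a b : gmul a b = gone -> b = ginv a.
Proof. intro H. apply (mul_cancel_l a). now rewrite H, gmul_Vr. Qed.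

Lemma ginv_ginv a : ginv (ginv a) = a.
Proof. symmetry. apply inv_unique. apply gmul_Vl. Qed.

Lemma ginv_one : ginv (@gone G) = gone.
Proof. symmetry. apply inv_unique. apply gmul_1l. Qed.

Lemma ginv_mul a b : ginv (gmul a b) = gmul (ginv b) (ginv a).
Proof. symmetry. apply inv_unique. rewrite gmul_assocr, mulKV. apply gmul_Vr. Qed.

Lemma mul_cancel_r a b c : gmul b a = gmul c a -> b = c.
Proof. intro H. rewrite <- (gmul_1r b), <- (gmul_1r c), <- (gmul_Vr a), !gmul_assoc, H. reflexivity. Qed.

Lemma sgn_negb (x : G) bb : sgn_val x (negb bb) = ginv (sgn_val x bb).
Proof. destruct bb; simpl; now rewrite ?ginv_ginv. Qed.

End GroupFacts.

Ltac gsimpl := repeat (rewrite ?gmul_assocr, ?gmul_1l, ?gmul_1r, ?ginv_mul, ?ginv_ginv,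
   ?ginv_one, ?gmul_Vr, ?gmul_Vl, ?mulKV, ?mulVK).

Lemma prod_list_app (G : Group) (l1 l2 : list (G * bool)) :
  prod_list (l1 ++ l2) = gmul (prod_list l1) (prod_list l2).
Proof. induction l1 as [|[x b] l IH]; simpl; gsimpl; now rewrite ?IH. Qed.

Lemma phi_app (G : Group) (u v : word G) : phi (u ++ v) = gmul (phi u) (phi v).
Proof. induction u as [|[x b] l IH]; simpl; gsimpl; now rewrite ?IH. Qed.

Definition inv_word {G : Group} (w : word G) : word G :=
  rev (map (fun ab => (fst ab, negb (snd ab))) w).

Lemma inv_word_app (G : Group) (u v : word G) : inv_word (u ++ v) = inv_word v ++ inv_word u.
Proof. unfold inv_word. now rewrite map_app, rev_app_distr. Qed.

Lemma phi_inv_word (G : Group) (w : word G) : phi (inv_word w) = ginv (phi w).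
Proof.
  induction w as [|[a b] w IH]; simpl; gsimpl; auto.
  unfold inv_word in *; simpl. rewrite phi_app, IH. simpl. rewrite sgn_negb. gsimpl. reflexivity.
Qed.

Lemma in_inv_word (G : Group) (w : word G) a b : In (a, b) (inv_word w) -> In (a, negb b) w.
Proof.
  unfold inv_word. rewrite <- in_rev, in_map_iff. intros [[a' b'] [E H]]. simpl in E.
  inversion E; subst. now rewrite Bool.negb_involutive.
Qed.

Lemma valid_inv_word (X : GroupPair) S (w : word X) : valid_word S w -> valid_word S (inv_word w).
Proof. intros H a b Hin. apply in_inv_word in Hin. eapply H; eauto. Qed.

Lemma valid_app (X : GroupPair) S (u v : word X) : valid_word S u -> valid_word S v -> valid_word S (u ++ v).
Proof. intros Hu Hv a b Hin. apply in_app_or in Hin as [H|H]; eauto. Qed.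

Lemma valid_app_inv (X : GroupPair) S (u v : word X) : valid_word S (u ++ v) -> valid_word S u /\ valid_word S v.
Proof. intros H; split; intros a b Hin; eapply H; apply in_or_app; eauto. Qed.

Lemma valid_nil (X : GroupPair) S : valid_word S (@nil (letter X * bool)).
Proof. intros a b []. Qed.

Lemma valid_cons (X : GroupPair) S (a : letter X) b w : valid_letter S a -> valid_word S w -> valid_word S ((a,b)::w).
Proof. intros Ha Hw a' b' [E|H]; [inversion E; subst; auto | eauto]. Qed.
Section Conseq.
Variable G : Group.
Variable vl : letter G -> Prop.
Variable Rel : word G -> Prop.
Notation cq := (conseq vl Rel).

Definition vw (w : word G) := forall a b, In (a, b) w -> vl a.

Lemma cq_ctx u v p s : cq u v -> cq (p ++ u ++ s) (p ++ v ++ s).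
Proof.
  induction 1.
  - apply cq_refl.
  - now apply cq_sym.
  - eapply cq_trans; eauto.
  - replace (p ++ (u ++ (a, b) :: (a, negb b) :: v) ++ s) with ((p ++ u) ++ (a, b) :: (a, negb b) :: (v ++ s))
      by (now rewrite <- !app_assoc).
    replace (p ++ (u ++ v) ++ s) with ((p ++ u) ++ (v ++ s)) by (now rewrite <- !app_assoc).
    now apply cq_cancel.
  - replace (p ++ (u ++ r ++ v) ++ s) with ((p ++ u) ++ r ++ (v ++ s)) by (now rewrite <- !app_assoc).
    replace (p ++ (u ++ v) ++ s) with ((p ++ u) ++ (v ++ s)) by (now rewrite <- !app_assoc).
    now apply cq_rel.
Qed.

Lemma cq_l u v p : cq u v -> cq (p ++ u) (p ++ v).
Proof. intro H. pose proof (cq_ctx p [] H). now rewrite !app_nil_r in H0. Qed.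

Lemma cq_r u v s : cq u v -> cq (u ++ s) (v ++ s).
Proof. intro H. exact (cq_ctx [] s H). Qed.

Lemma cq_app u u' v v' : cq u u' -> cq v v' -> cq (u ++ v) (u' ++ v').
Proof. intros H1 H2. eapply cq_trans. apply cq_r; eauto. apply cq_l; eauto. Qed.

Lemma inv_word_cons (a : letter G) b w : inv_word ((a,b)::w) = inv_word w ++ [(a, negb b)].
Proof. reflexivity. Qed.

Lemma cq_cancel_word w : vw w -> cq (w ++ inv_word w) [].
Proof.
  induction w as [|[a b] w IH]; intro Hw.
  - apply cq_refl.
  - rewrite inv_word_cons. simpl. rewrite app_assoc.
    eapply cq_trans.
    + change ((a, b) :: (w ++ inv_word w) ++ [(a, negb b)]) with ([(a, b)] ++ (w ++ inv_word w) ++ [(a, negb b)]).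
      apply cq_ctx. apply IH. intros a' b' H; eapply Hw; right; eauto.
    + simpl. apply (@cq_cancel _ _ _ [] []). eapply Hw; left; eauto.
Qed.

Lemma inv_word_inv (w : word G) : inv_word (inv_word w) = w.
Proof.
  induction w as [|[a b] w IH]; auto. rewrite inv_word_cons, inv_word_app, IH. simpl.
  now rewrite Bool.negb_involutive.
Qed.

Lemma vw_inv w : vw w -> vw (inv_word w).
Proof. intros H a b Hin. apply in_inv_word in Hin. eauto. Qed.

Lemma cq_cancel_word' w : vw w -> cq (inv_word w ++ w) [].
Proof. intro H. pose proof (cq_cancel_word (vw_inv H)). now rewrite inv_word_inv in H0. Qed.

Lemma cq_phi : (forall r, Rel r -> phi r = gone) -> forall u v, cq u v -> phi u = phi v.
Proof.
  intros HR u v H; induction H; auto; try congruence.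
  - rewrite !phi_app. simpl. rewrite sgn_negb. gsimpl. reflexivity.
  - rewrite !phi_app, (HR r H). gsimpl. reflexivity.
Qed.

Lemma vw_app u v : vw (u ++ v) <-> vw u /\ vw v.
Proof.
  split.
  - intro H; split; intros a b Hin; eapply H; apply in_or_app; eauto.
  - intros [H1 H2] a b Hin. apply in_app_or in Hin as [Hin|Hin]; eauto.
Qed.

Lemma cq_valid : (forall r, Rel r -> vw r) -> forall u v, cq u v -> (vw u <-> vw v).
Proof.
  intros HR u v H; induction H; try tauto.
  - rewrite !vw_app. split.
    + intros [H1 H2]; split; auto. intros a' b' Hin; eapply H2; right; right; eauto.
    + intros [H1 H2]; split; auto. intros a' b' [E|[E|Hin]]; try (inversion E; subst; auto); eauto.
  - rewrite !vw_app. specialize (HR r H). tauto.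
Qed.

Lemma cq_move_r u v w : vw w -> cq (u ++ inv_word w) v -> cq u (v ++ w).
Proof.
  intros Hw H. eapply cq_trans; [| apply cq_r; exact H].
  rewrite <- app_assoc. rewrite <- (app_nil_r u) at 1. apply cq_l. apply cq_sym.
  apply cq_cancel_word'; auto.
Qed.

Lemma cq_loop_eq u v : vw v -> cq (u ++ inv_word v) [] -> cq u v.
Proof. intros Hv H. pose proof (@cq_move_r u [] v Hv H). simpl in H0. auto. Qed.

End Conseq.

Lemma cq_mono (G : Group) (vl : letter G -> Prop) (R1 R2 : word G -> Prop) :
  (forall r, R1 r -> R2 r) -> forall u v, conseq vl R1 u v -> conseq vl R2 u v.
Proof.
  intros HR u v H; induction H.
  - apply cq_refl.
  - now apply cq_sym.
  - eapply cq_trans; eauto.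
  - now apply cq_cancel.
  - apply cq_rel; auto.
Qed.
Lemma cq_inv (G : Group) (vl : letter G -> Prop) (Rel : word G -> Prop) :
  (forall r, Rel r -> vw vl r) -> forall u v, conseq vl Rel u v -> conseq vl Rel (inv_word u) (inv_word v).
Proof.
  intros HR u v H; induction H.
  - apply cq_refl.
  - now apply cq_sym.
  - eapply cq_trans; eauto.
  - rewrite !inv_word_app. rewrite (inv_word_cons a b), (inv_word_cons a (negb b)).
    rewrite <- !app_assoc. simpl. rewrite Bool.negb_involutive. now apply cq_cancel.
  - rewrite !inv_word_app. rewrite <- app_assoc.
    rewrite <- (app_nil_l (inv_word u)) at 2. change (inv_word v ++ [] ++ inv_word u) with (inv_word v ++ inv_word u).
    rewrite <- (app_nil_l (inv_word u)) at 2. apply cq_ctx.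
    assert (Hr : conseq vl Rel (inv_word r ++ r) (inv_word r)).
    { pose proof (@cq_rel _ vl Rel (inv_word r) [] r H). now rewrite !app_nil_r in H0. }
    eapply cq_trans; [apply cq_sym; exact Hr|]. apply cq_cancel_word'. auto.
Qed.
(** * S-words, distances, geodesics *)
Definition sw {G : Group} (l : list (G * bool)) : word G := map (fun sb => (LS (fst sb), snd sb)) l.

Lemma sw_app (G : Group) (l1 l2 : list (G * bool)) : sw (l1 ++ l2) = sw l1 ++ sw l2.
Proof. apply map_app. Qed.

Lemma phi_sw (G : Group) (l : list (G * bool)) : phi (sw l) = prod_list l.
Proof. induction l as [|[x b] l IH]; simpl; auto. now rewrite IH. Qed.

Definition inS {G : Group} (S : list G) (l : list (G * bool)) := forall y b, In (y, b) l -> In y S.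

Lemma valid_sw (X : GroupPair) (S : list X) l : inS S l -> valid_word S (sw l).
Proof. intros H a b Hin. unfold sw in Hin. apply in_map_iff in Hin as [[y b'] [E Hin]].
  inversion E; subst. simpl. eauto. Qed.

Definition invl {G : Group} (l : list (G * bool)) : list (G * bool) := rev (map (fun sb => (fst sb, negb (snd sb))) l).

Lemma prod_invl (G : Group) (l : list (G * bool)) : prod_list (invl l) = ginv (prod_list l).
Proof.
  induction l as [|[x b] l IH]; simpl; gsimpl; auto.
  unfold invl in *; simpl. rewrite prod_list_app, IH. simpl. rewrite sgn_negb. gsimpl. reflexivity.
Qed.

Lemma inS_invl (G : Group) S (l : list (G * bool)) : inS S l -> inS S (invl l).
Proof. unfold invl. intros H y b Hin. rewrite <- in_rev, in_map_iff in Hin.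
  destruct Hin as [[y' b'] [E Hin]]. inversion E; subst. eauto. Qed.

Lemma length_invl (G : Group) (l : list (G * bool)) : length (invl l) = length l.
Proof. unfold invl. now rewrite length_rev, length_map. Qed.

Lemma inS_app (G : Group) S (l1 l2 : list (G * bool)) : inS S l1 -> inS S l2 -> inS S (l1 ++ l2).
Proof. intros H1 H2 y b Hin. apply in_app_or in Hin as [H|H]; eauto. Qed.

Lemma sw_invl (G : Group) (l : list (G * bool)) : sw (invl l) = inv_word (sw l).
Proof. unfold sw, invl, inv_word. rewrite map_rev, !map_map. reflexivity. Qed.

Section Dist.
Variable G : Group.
Variable S : list G.

Lemma wl_mono x n m : word_len_le S x n -> n <= m -> word_len_le S x m.
Proof. intros [l [H1 [H2 H3]]] Hm. exists l. repeat split; auto. lia. Qed.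

Lemma wl_inv x n : word_len_le S x n -> word_len_le S (ginv x) n.
Proof. intros [l [H1 [H2 H3]]]. exists (invl l). rewrite length_invl, prod_invl, H3.
  repeat split; auto. apply inS_invl. exact H2. Qed.

Lemma wl_mul x y n m : word_len_le S x n -> word_len_le S y m -> word_len_le S (gmul x y) (n + m).
Proof. intros [l [H1 [H2 H3]]] [l' [H1' [H2' H3']]]. exists (l ++ l').
  rewrite length_app, prod_list_app, H3, H3'. repeat split; auto; try lia. apply inS_app; auto. Qed.

Lemma wl_one : word_len_le S gone 0.
Proof. exists []. repeat split; simpl; auto. intros y b []. Qed.

Lemma wl_gen s b : In s S -> word_len_le S (sgn_val s b) 1.
Proof. intro H. exists [(s,b)]. repeat split; simpl; auto. intros y b' [E|[]]; inversion E; subst; auto.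
  gsimpl; reflexivity. Qed.

Lemma dist_sym x y n : dist_le S x y n -> dist_le S y x n.
Proof. unfold dist_le. intro H. apply wl_inv in H. rewrite ginv_mul, ginv_ginv in H. exact H. Qed.

Lemma dist_trans x y z n m : dist_le S x y n -> dist_le S y z m -> dist_le S x z (n + m).
Proof. unfold dist_le. intros H1 H2. pose proof (wl_mul H1 H2). rewrite gmul_assocr, mulKV in H. exact H. Qed.

Lemma dist_mono x y n m : dist_le S x y n -> n <= m -> dist_le S x y m.
Proof. apply wl_mono. Qed.

Lemma dist_refl x : dist_le S x x 0.
Proof. unfold dist_le. gsimpl. apply wl_one. Qed.

Lemma dist_lt_le x y M : dist_lt S x y M -> dist_le S x y M.
Proof. intros [k [Hk H]]. eapply dist_mono; eauto. lia. Qed.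

End Dist.

Lemma min_nat (P : nat -> Prop) : (exists n, P n) -> exists n, P n /\ forall m, P m -> n <= m.
Proof.
  intros [n Hn]. revert Hn. induction n as [n IH] using (well_founded_induction lt_wf). intro Hn.
  destruct (classic (exists m, P m /\ m < n)) as [[m [Hm1 Hm2]]|Hno].
  - exact (IH m Hm2 Hm1).
  - exists n. split; auto. intros m Hm. destruct (le_lt_dec n m); auto. exfalso; eauto.
Qed.

Definition geo_spec {G : Group} (S : list G) (a b : G) (l : list (G * bool)) : Prop :=
  inS S l /\ prod_list l = gmul (ginv a) b /\ forall n, dist_le S a b n -> length l <= n.

Definition geo {G : Group} (S : list G) (a b : G) : list (G * bool) :=
  epsilon (inhabits []) (geo_spec S a b).

Lemma geo_ok (G : Group) (S : list G) a b : generates S -> geo_spec S a b (geo S a b).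
Proof.
  intro HS. unfold geo. apply epsilon_spec.
  destruct (min_nat (fun n => dist_le S a b n)) as [n [[l [H1 [H2 H3]]] Hmin]].
  - apply HS.
  - exists l. repeat split; auto. intros m Hm. specialize (Hmin m Hm). lia.
Qed.

Definition pick {A : Type} (d : A) (P : A -> Prop) : A := epsilon (inhabits d) P.
Lemma pick_ok A (d : A) (P : A -> Prop) : (exists x, P x) -> P (pick d P).
Proof. apply epsilon_spec. Qed.

Lemma unif_bound A (l : list A) (P : A -> nat -> Prop) :
  (forall x n m, P x n -> n <= m -> P x m) ->
  (forall x, In x l -> exists n, P x n) -> exists n, forall x, In x l -> P x n.
Proof.
  intros Hm. induction l as [|x l IH]; intro H.
  - exists 0. intros _ [].
  - destruct IH as [n Hn]. { intros y Hy. apply H. now right. }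
    destruct (H x (or_introl eq_refl)) as [k Hk].
    exists (n + k). intros y [E|Hy].
    + subst. eapply Hm; eauto. lia.
    + eapply Hm; eauto. lia.
Qed.

Lemma fin_filter A (l : list A) (P : A -> Prop) : exists l', forall x, In x l' <-> In x l /\ P x.
Proof.
  induction l as [|a l [l' IH]].
  - exists []. simpl. tauto.
  - destruct (classic (P a)).
    + exists (a :: l'). intro x. simpl. rewrite IH. split; [intros [E|H']; subst; tauto | tauto].
    + exists l'. intro x. simpl. rewrite IH. split; [tauto|]. intros [[E|H'] HP]; subst; tauto.
Qed.
(** * The X side: relators and reduction lemmas *)
Section XSide.
Variable X : GroupPair.
Variable SX : list X.
Hypothesis HSX : generates SX.
Variable K : nat.

Definition Rset (r : word X) : Prop :=
  exists l i, inS SX l /\ length l <= K /\ i < gp_n X /\ gp_sub X i (prod_list l) /\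
    r = sw l ++ [(LP i (prod_list l), false)].

Definition RelX (r : word X) : Prop := Rset r \/ table_rel r.

Notation E := (conseq (valid_letter SX) RelX).

Lemma sub1 i : i < gp_n X -> gp_sub X i gone.
Proof. intro H. apply (gp_subgroups H). Qed.
Lemma subM i a b : i < gp_n X -> gp_sub X i a -> gp_sub X i b -> gp_sub X i (gmul a b).
Proof. intro H. apply (gp_subgroups H). Qed.
Lemma subV i a : i < gp_n X -> gp_sub X i a -> gp_sub X i (ginv a).
Proof. intro H. apply (gp_subgroups H). Qed.

Lemma RelX_phi r : RelX r -> phi r = gone.
Proof.
  intros [[l [i [H1 [H2 [H3 [H4 ->]]]]]] | [i [p [q [H1 [H2 [H3 ->]]]]]]].
  - rewrite phi_app, phi_sw. simpl. gsimpl. reflexivity.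
  - simpl. gsimpl. reflexivity.
Qed.

Lemma RelX_valid r : RelX r -> vw (valid_letter SX) r.
Proof.
  intros [[l [i [H1 [H2 [H3 [H4 ->]]]]]] | [i [p [q [H1 [H2 [H3 ->]]]]]]].
  - apply valid_app. apply valid_sw; auto. apply valid_cons. simpl; auto. apply valid_nil.
  - repeat apply valid_cons; simpl; auto using subM. apply valid_nil.
Qed.

Lemma E_phi u v : E u v -> phi u = phi v.
Proof. apply cq_phi. apply RelX_phi. Qed.

Lemma E_inv u v : E u v -> E (inv_word u) (inv_word v).
Proof. apply cq_inv. apply RelX_valid. Qed.

Lemma E_rel r : RelX r -> E r [].
Proof. intro H. pose proof (@cq_rel _ (valid_letter SX) RelX [] [] r H). now rewrite app_nil_r in H0. Qed.

Lemma E_letter_eq w (a : letter X) : valid_letter SX a -> E (w ++ [(a, false)]) [] -> E w [(a, true)].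
Proof. intros Ha H. apply cq_loop_eq. intros a' b' [E1|[]]; inversion E1; subst; auto. exact H. Qed.

Lemma P1_triv i : i < gp_n X -> E [(LP i gone, true)] [].
Proof.
  intro Hi. assert (Ht : E [(LP i gone, true); (LP i gone, true); (LP i gone, false)] []).
  { apply E_rel. right. exists i, gone, gone. repeat split; auto using sub1. now rewrite gmul_1l. }
  eapply cq_trans; [|exact Ht]. apply cq_sym.
  apply (@cq_cancel _ _ _ [(LP i gone, true)] [] (LP i gone) true). simpl; auto using sub1.
Qed.

Lemma merge i a b : i < gp_n X -> gp_sub X i a -> gp_sub X i b ->
  E [(LP i a, true); (LP i b, true)] [(LP i (gmul a b), true)].
Proof.
  intros Hi Ha Hb. apply E_letter_eq. simpl; auto using subM.
  apply E_rel. right. exists i, a, b. repeat split; auto.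
Qed.

Lemma neg_letter i a : i < gp_n X -> gp_sub X i a -> E [(LP i a, false)] [(LP i (ginv a), true)].
Proof.
  intros Hi Ha.
  assert (H1 : E [(LP i a, true); (LP i (ginv a), true)] []).
  { eapply cq_trans. apply merge; auto using subV. rewrite gmul_Vr. apply P1_triv; auto. }
  eapply cq_trans. 2:{ apply (@cq_cancel _ _ _ [] [(LP i (ginv a), true)] (LP i a) false). simpl; auto. }
  simpl. pose proof (@cq_l _ _ _ _ _ [(LP i a, false)] H1). simpl in H. apply cq_sym. exact H.
Qed.

Definition Pw i (w : word X) := forall a b, In (a, b) w -> exists x, a = LP i x /\ gp_sub X i x.

Lemma Pw_phi i w : i < gp_n X -> Pw i w -> gp_sub X i (phi w).
Proof.
  intro Hi. induction w as [|[a b] w IH]; intro Hw; simpl. apply sub1; auto.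
  destruct (Hw a b (or_introl eq_refl)) as [y [-> Hy]]. apply subM; auto.
  destruct b; simpl; auto using subV. apply IH. intros a' b' H; eapply Hw; right; eauto.
Qed.

Lemma Pw_collapse i w : i < gp_n X -> Pw i w -> E w [(LP i (phi w), true)].
Proof.
  intros Hi. induction w as [|[a b] w IH]; intro Hw.
  - simpl. apply cq_sym. apply P1_triv; auto.
  - destruct (Hw a b (or_introl eq_refl)) as [x [-> Hx]].
    assert (Hw' : Pw i w) by (intros a' b' H; eapply Hw; right; eauto).
    specialize (IH Hw').
    assert (Hpw : gp_sub X i (phi w)) by (apply Pw_phi; auto).
    change ((LP i x, b) :: w) with ([(LP i x, b)] ++ w).
    eapply cq_trans. apply cq_l. exact IH.
    destruct b; simpl.
    + apply merge; auto.
    + eapply cq_trans. apply (cq_r [(LP i (phi w), true)] (@neg_letter i x Hi Hx)).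
      simpl. apply merge; auto using subV.
Qed.

Definition sred k (w : word X) := exists l, inS SX l /\ length l <= k /\ E w (sw l).

Lemma sred_mono k k' w : sred k w -> k <= k' -> sred k' w.
Proof. intros [l [H1 [H2 H3]]] H. exists l. repeat split; auto. lia. Qed.

Lemma sred_app k1 k2 u v : sred k1 u -> sred k2 v -> sred (k1 + k2) (u ++ v).
Proof.
  intros [l [H1 [H2 H3]]] [l' [H1' [H2' H3']]]. exists (l ++ l'). rewrite sw_app, length_app.
  repeat split; auto using inS_app; try lia. now apply cq_app.
Qed.

Lemma sred_sw l k : inS SX l -> length l <= k -> sred k (sw l).
Proof. intros H1 H2. exists l. repeat split; auto. apply cq_refl. Qed.

Lemma sred_nil : sred 0 [].
Proof. exists []. repeat split; simpl; auto. intros y b []. apply cq_refl. Qed.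

Lemma close_sw l i : inS SX l -> length l <= K -> i < gp_n X -> gp_sub X i (prod_list l) ->
  E (sw l) [(LP i (prod_list l), true)].
Proof.
  intros H1 H2 Hi Hp. apply E_letter_eq. simpl; auto.
  apply E_rel. left. exists l, i. repeat split; auto.
Qed.

Lemma sred_close k w i : sred k w -> k <= K -> i < gp_n X -> gp_sub X i (phi w) ->
  E w [(LP i (phi w), true)].
Proof.
  intros [l [H1 [H2 H3]]] Hk Hi Hp. pose proof (E_phi H3) as Hph. rewrite phi_sw in Hph.
  rewrite Hph in *. eapply cq_trans. exact H3. apply close_sw; auto. lia.
Qed.

Lemma sred_loop k w : sred k w -> k <= K -> phi w = gone -> E w [].
Proof.
  intros Hs Hk Hp. pose proof (gp_nonempty X) as Hn.
  eapply cq_trans. apply (sred_close Hs Hk Hn). rewrite Hp. apply sub1; auto.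
  rewrite Hp. apply P1_triv; auto.
Qed.

Lemma sred_inv k w : sred k w -> sred k (inv_word w).
Proof.
  intros [l [H1 [H2 H3]]]. exists (invl l). rewrite length_invl, sw_invl.
  repeat split; auto using inS_invl. now apply E_inv.
Qed.

Lemma sred_valid k w : sred k w -> vw (valid_letter SX) w.
Proof.
  intros [l [H1 [H2 H3]]]. apply (cq_valid RelX_valid H3). apply valid_sw; auto.
Qed.

Lemma sred_eq k1 k2 u v : sred k1 u -> sred k2 v -> k1 + k2 <= K -> phi u = phi v -> E u v.
Proof.
  intros Hu Hv Hk Hp. apply cq_loop_eq. eapply sred_valid; eauto.
  apply (@sred_loop (k1 + k2)); auto. apply sred_app; auto. apply sred_inv; auto.
  rewrite phi_app, phi_inv_word, Hp. gsimpl. reflexivity.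
Qed.

Lemma sred_P i x b m : i < gp_n X -> gp_sub X i x -> word_len_le SX x m -> m <= K ->
  sred m [(LP i x, b)].
Proof.
  intros Hi Hx [l [H1 [H2 H3]]] Hm.
  assert (Hc : E (sw l) [(LP i x, true)]) by (subst; apply close_sw; auto; lia).
  destruct b.
  - exists l. repeat split; auto. now apply cq_sym.
  - exists (invl l). rewrite length_invl, sw_invl. repeat split; auto using inS_invl.
    apply cq_sym. apply E_inv in Hc. exact Hc.
Qed.

Lemma sred_eqP k1 k2 u v i : sred k1 u -> sred k2 v -> k1 + k2 <= K -> i < gp_n X ->
  gp_sub X i (gmul (ginv (phi u)) (phi v)) ->
  E v (u ++ [(LP i (gmul (ginv (phi u)) (phi v)), true)]).
Proof.
  intros Hu Hv Hk Hi Hp.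
  assert (H1 : E (inv_word u ++ v) [(LP i (gmul (ginv (phi u)) (phi v)), true)]).
  { rewrite <- phi_inv_word, <- phi_app. apply (@sred_close (k1 + k2)); auto.
    apply sred_app; auto. apply sred_inv; auto. rewrite phi_app, phi_inv_word. auto. }
  eapply cq_trans. 2:{ apply cq_l. exact H1. }
  rewrite app_assoc. apply cq_sym. rewrite <- (app_nil_l v) at 2. apply cq_r.
  apply cq_cancel_word. eapply sred_valid; eauto.
Qed.

Lemma sred_loopP k1 k2 u v i z : sred k1 u -> sred k2 v -> k1 + k2 <= K -> i < gp_n X ->
  gp_sub X i z -> phi (u ++ [(LP i z, true)] ++ v) = gone -> E (u ++ [(LP i z, true)] ++ v) [].
Proof.
  intros Hu Hv Hk Hi Hz Hp.
  rewrite !phi_app in Hp. simpl in Hp. rewrite gmul_1r in Hp.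
  assert (Hvu : gmul (phi v) (phi u) = ginv z).
  { apply inv_unique. apply inv_unique in Hp. rewrite <- gmul_assocr, Hp. apply gmul_Vl. }
  assert (H1 : E (v ++ u) [(LP i (ginv z), true)]).
  { rewrite <- Hvu, <- phi_app. apply (@sred_close (k2 + k1)); auto. apply sred_app; auto. lia.
    rewrite phi_app, Hvu. auto using subV. }
  assert (Vu : vw (valid_letter SX) u) by (eapply sred_valid; eauto).
  assert (H2 : E ([(LP i z, true)] ++ v ++ u) []).
  { eapply cq_trans. apply cq_l. exact H1. simpl.
    eapply cq_trans. apply merge; auto using subV. rewrite gmul_Vr. apply P1_triv; auto. }
  apply cq_sym. eapply cq_trans. apply cq_sym. apply cq_cancel_word. exact Vu.
  apply cq_l. apply cq_sym.
  eapply cq_trans. rewrite <- (app_nil_r ([(LP i z, true)] ++ v)) at 1. apply cq_l. apply cq_sym.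
  apply cq_cancel_word. exact Vu.
  rewrite !app_assoc. rewrite <- (app_nil_l (inv_word u)) at 2. apply cq_r.
  rewrite <- !app_assoc. exact H2.
Qed.

End XSide.
Arguments sred {X} SX K k w.
Arguments RelX {X} SX K r.
Arguments Rset {X} SX K r.
Arguments Pw {X} i w.
Lemma sred_cons (X : GroupPair) (SX : list X) K k1 k2 (a : letter X * bool) w :
  sred SX K k1 [a] -> sred SX K k2 w -> sred SX K (k1 + k2) (a :: w).
Proof. intros H1 H2. exact (sred_app H1 H2). Qed.
Lemma glue (X : GroupPair) (SX : list X) K i x1 x2 k S :
  i < gp_n X -> gp_sub X i x1 -> gp_sub X i x2 -> sred SX K k S -> k <= K -> gp_sub X i (phi S) ->
  conseq (valid_letter SX) (RelX SX K) ([(LP i x1, true)] ++ S ++ [(LP i x2, true)])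
     [(LP i (gmul x1 (gmul (phi S) x2)), true)].
Proof.
  intros Hi H1 H2 Hs Hk Hp.
  eapply cq_trans. apply cq_l. apply cq_r. eapply sred_close; eauto. simpl.
  change [(LP i x1, true); (LP i (phi S), true); (LP i x2, true)] with
    ([(LP i x1, true)] ++ [(LP i (phi S), true); (LP i x2, true)]).
  eapply cq_trans. apply cq_l. apply merge; auto. simpl. apply merge; auto. apply subM; auto.
Qed.
Lemma dist_step (G : Group) (S : list G) (y v : G) b m : word_len_le S v m -> dist_le S y (gmul y (sgn_val v b)) m.
Proof. intro H. unfold dist_le. rewrite mulVK. destruct b; simpl; auto. apply wl_inv; auto. Qed.

Lemma geo_len (G : Group) (S : list G) a b n : generates S -> dist_le S a b n -> length (geo S a b) <= n.
Proof. intros HS H. apply (geo_ok a b HS). exact H. Qed.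

Lemma sred_geo (X : GroupPair) (SX : list X) (K : nat) (a b : X) n : generates SX -> dist_le SX a b n -> sred SX K n (sw (geo SX a b)).
Proof. intros HS H. apply sred_sw. apply (geo_ok a b HS). apply geo_len; auto. Qed.

Lemma valid_geo (X : GroupPair) (SX : list X) (a b : X) : generates SX -> valid_word SX (sw (geo SX a b)).
Proof. intro HS. apply valid_sw. apply (geo_ok a b HS). Qed.
Section Main.
Variables X Y : GroupPair.
Variable SX : list X.
Variable SY : list Y.
Variables L C M : nat.
Variable f1 : X -> Y.
Variable f2 : coset_rep X -> coset_rep Y.
Variable r1 : Y -> X.
Variable r2 : coset_rep Y -> coset_rep X.
Hypothesis HSX : generates SX.
Hypothesis HSY : generates SY.
Hypothesis Hf1 : forall x x' n, dist_le SX x x' n -> dist_le SY (f1 x) (f1 x') (L * n + C).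
Hypothesis Hf2v : forall c, valid_coset (X:=X) c -> valid_coset (f2 c).
Hypothesis HfH : forall c, valid_coset (X:=X) c ->
     (forall p, gp_sub X (fst c) p ->
        exists q, gp_sub Y (fst (f2 c)) q /\
          dist_lt SY (f1 (gmul (snd c) p)) (gmul (snd (f2 c)) q) M).
Hypothesis Hr1 : forall x x' n, dist_le SY x x' n -> dist_le SX (r1 x) (r1 x') (L * n + C).
Hypothesis Hr2v : forall c, valid_coset (X:=Y) c -> valid_coset (r2 c).
Hypothesis Hr2w : forall c d, valid_coset (X:=Y) c -> same_coset c d -> same_coset (r2 c) (r2 d).
Hypothesis HrH : forall c, valid_coset (X:=Y) c ->
     (forall q, gp_sub Y (fst c) q ->
        exists p, gp_sub X (fst (r2 c)) p /\
          dist_lt SX (r1 (gmul (snd c) q)) (gmul (snd (r2 c)) p) M).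
Hypothesis Hret1 : forall g : X, dist_le SX (r1 (f1 g)) g C.
Hypothesis Hret2 : forall c, valid_coset (X:=X) c -> same_coset (r2 (f2 c)) c.

Variable T : list Y.
Variable RY : list (word Y).
Hypothesis HY : relative_presentation T RY.

Definition Ybnd m (W : word Y) := forall a bb, In (a, bb) W -> word_len_le SY (letter_val a) m.

Variable Wc : Y -> bool -> word Y.
Variables mW lW mT mR lR : nat.
Hypothesis HWc : forall b s, In b SY -> valid_word T (Wc b s) /\ phi (Wc b s) = sgn_val b s.
Hypothesis HWb : forall b s, In b SY -> length (Wc b s) <= lW /\ Ybnd mW (Wc b s).
Hypothesis HmT : forall t, In t T -> word_len_le SY t mT.
Hypothesis HmR : forall r, In r RY -> length r <= lR /\ Ybnd mR r.

Definition cb m := M + (2 * M + (L * m + C)) + M.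

Variable K : nat.

Notation E := (conseq (valid_letter SX) (RelX SX K)).
Notation EY := (conseq (valid_letter T) (fun r => In r RY \/ table_rel r)).

Lemma subY1 i : i < gp_n Y -> gp_sub Y i gone.
Proof. intro H. apply (gp_subgroups H). Qed.
Lemma subYM i a b : i < gp_n Y -> gp_sub Y i a -> gp_sub Y i b -> gp_sub Y i (gmul a b).
Proof. intro H. apply (gp_subgroups H). Qed.
Lemma subYV i a : i < gp_n Y -> gp_sub Y i a -> gp_sub Y i (ginv a).
Proof. intro H. apply (gp_subgroups H). Qed.

Lemma same_coset_sym (Z : GroupPair) (c d : coset_rep Z) : valid_coset c -> same_coset c d -> same_coset d c.
Proof.
  destruct c as [i a], d as [j b]. unfold valid_coset, same_coset; simpl. intros Hv [-> H].
  split; auto. pose proof (proj2 (proj2 (gp_subgroups Hv)) _ H). rewrite ginv_mul, ginv_ginv in H0. exact H0.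
Qed.

Lemma same_coset_trans (Z : GroupPair) (c d e : coset_rep Z) : valid_coset c -> same_coset c d -> same_coset d e -> same_coset c e.
Proof.
  destruct c as [i a], d as [j b], e as [k x]. unfold valid_coset, same_coset; simpl. intros Hv [-> H] [-> H'].
  split; auto. pose proof (proj1 (proj2 (gp_subgroups Hv)) _ _ H H'). rewrite gmul_assocr, mulKV in H0. exact H0.
Qed.

Lemma same_coset_valid (Z : GroupPair) (c d : coset_rep Z) : valid_coset c -> same_coset c d -> valid_coset d.
Proof. destruct c, d. unfold valid_coset, same_coset; simpl. intros H [<- _]. auto. Qed.

Definition near (c : coset_rep Y) (z : Y) : X :=
  pick gone (fun p => gp_sub X (fst (r2 c)) p /\
     dist_lt SX (r1 (gmul (snd c) z)) (gmul (snd (r2 c)) p) M).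

Lemma near_ok c z : valid_coset c -> gp_sub Y (fst c) z ->
  gp_sub X (fst (r2 c)) (near c z) /\ dist_lt SX (r1 (gmul (snd c) z)) (gmul (snd (r2 c)) (near c z)) M.
Proof. intros Hc Hz. unfold near. apply pick_ok. apply HrH; auto. Qed.

Definition pt (c : coset_rep Y) (z : Y) : X := gmul (snd (r2 c)) (near c z).

Definition conn (y : Y) (ab : letter Y * bool) : word X :=
  match fst ab with
  | LS t => sw (geo SX (r1 y) (r1 (gmul y (sgn_val t (snd ab)))))
  | LP j q =>
      sw (geo SX (r1 y) (pt (j, y) gone)) ++
      [(LP (fst (r2 (j, y))) (gmul (ginv (near (j, y) gone)) (near (j, y) (sgn_val q (snd ab)))), true)] ++
      sw (geo SX (pt (j, y) (sgn_val q (snd ab))) (r1 (gmul y (sgn_val q (snd ab)))))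
  end.

Fixpoint theta (y : Y) (W : word Y) : word X :=
  match W with
  | [] => []
  | ab :: W' => conn y ab ++ theta (gmul y (sgn_val (letter_val (fst ab)) (snd ab))) W'
  end.

Lemma phi_geo (a b : X) : phi (sw (geo SX a b)) = gmul (ginv a) b.
Proof. rewrite phi_sw. apply (geo_ok a b HSX). Qed.

Lemma phi_conn y a b : phi (conn y (a, b)) = gmul (ginv (r1 y)) (r1 (gmul y (sgn_val (letter_val a) b))).
Proof.
  destruct a as [t | j q]; unfold conn; simpl.
  - apply phi_geo.
  - rewrite !phi_app. simpl. rewrite !phi_geo. unfold pt. gsimpl. reflexivity.
Qed.

Lemma phi_theta W : forall y, phi (theta y W) = gmul (ginv (r1 y)) (r1 (gmul y (phi W))).
Proof.
  induction W as [|[a b] W IH]; intro y; simpl.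
  - gsimpl. reflexivity.
  - rewrite phi_app, phi_conn, IH. gsimpl. reflexivity.
Qed.

Lemma theta_eq y y' W : y = y' -> theta y W = theta y' W.
Proof. now intros ->. Qed.

Lemma theta_app U V : forall y, theta y (U ++ V) = theta y U ++ theta (gmul y (phi U)) V.
Proof.
  induction U as [|[a b] U IH]; intro y; simpl.
  - now rewrite gmul_1r.
  - rewrite IH, app_assoc. f_equal. apply theta_eq. now rewrite gmul_assoc.
Qed.

Lemma sgn_sub (Z : GroupPair) i q b : i < gp_n Z -> gp_sub Z i q -> gp_sub Z i (sgn_val q b).
Proof. intros Hi Hq. destruct b; simpl; auto. apply (gp_subgroups Hi); auto. Qed.

Lemma valid_conn y a b : valid_letter T a -> valid_word SX (conn y (a, b)).
Proof.
  destruct a as [t | j q]; intro Ha; unfold conn; simpl.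
  - apply valid_geo; auto.
  - destruct Ha as [Hj Hq].
    assert (Hc : valid_coset (X:=Y) (j, y)) by exact Hj.
    destruct (@near_ok (j, y) gone Hc (subY1 Hj)) as [Hp1 _].
    destruct (@near_ok (j, y) (sgn_val q b) Hc (@sgn_sub Y j q b Hj Hq)) as [Hp2 _].
    pose proof (Hr2v Hc) as Hv.
    apply valid_app. apply valid_geo; auto. apply valid_cons. 
    + simpl. split; auto. apply subM; auto. apply subV; auto.
    + apply valid_geo; auto.
Qed.

Lemma valid_theta W : forall y, valid_word T W -> valid_word SX (theta y W).
Proof.
  induction W as [|[a b] W IH]; intros y HW; simpl. apply valid_nil.
  apply valid_app. apply valid_conn. eapply HW; left; eauto.
  apply IH. intros a' b' H; eapply HW; right; eauto.
Qed.

Lemma sred_conn y a b m : valid_letter T a -> word_len_le SY (letter_val a) m ->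
  2 * M + (L * m + C) <= K -> sred SX K (cb m) (conn y (a, b)).
Proof.
  intros Ha Hm HK. destruct a as [t | j q]; unfold conn; cbn [fst snd letter_val valid_letter] in *.
  - apply sred_geo; auto. eapply dist_mono. apply Hr1. apply dist_step. exact Hm. unfold cb; lia.
  - destruct Ha as [Hj Hq].
    assert (Hc : valid_coset (X:=Y) (j, y)) by exact Hj.
    destruct (@near_ok (j, y) gone Hc (subY1 Hj)) as [Hp1 Hd1].
    destruct (@near_ok (j, y) (sgn_val q b) Hc (@sgn_sub Y j q b Hj Hq)) as [Hp2 Hd2].
    simpl in *. rewrite gmul_1r in Hd1.
    pose proof (Hr2v Hc) as Hv.
    unfold cb. replace (M + (2 * M + (L * m + C)) + M) with (M + ((2 * M + (L * m + C)) + M)) by lia.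
    apply sred_app; [|apply sred_cons].
    + apply sred_geo; auto. apply dist_lt_le; auto.
    + apply sred_P; auto. apply subM; auto. apply subV; auto.
      assert (Hd : dist_le SX (pt (j, y) gone) (pt (j, y) (sgn_val q b)) (M + (L * m + C) + M)).
      { eapply dist_trans. eapply dist_trans. apply dist_sym. apply dist_lt_le. exact Hd1.
        apply Hr1. apply dist_step. exact Hm. apply dist_lt_le. exact Hd2. }
      unfold dist_le, pt in Hd. rewrite ginv_mul, gmul_assocr, mulVK in Hd.
      eapply wl_mono. exact Hd. lia.
    + apply sred_geo; auto. apply dist_sym. apply dist_lt_le; auto.
Qed.

Lemma sred_theta W m : forall y, valid_word T W -> Ybnd m W -> 2 * M + (L * m + C) <= K ->
  sred SX K (length W * cb m) (theta y W).
Proof.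
  induction W as [|[a b] W IH]; intros y HW Hb HK; simpl.
  - apply sred_nil.
  - apply sred_app. apply sred_conn; auto. eapply HW; left; eauto. eapply Hb; left; eauto.
    apply IH; auto. intros a' b' H; eapply HW; right; eauto. intros a' b' H; eapply Hb; right; eauto.
Qed.
Lemma conn_LP_eq y j q b : conn y (LP j q, b) =
  sw (geo SX (r1 y) (pt (j, y) gone)) ++
  [(LP (fst (r2 (j, y))) (gmul (ginv (near (j, y) gone)) (near (j, y) (sgn_val q b))), true)] ++
  sw (geo SX (pt (j, y) (sgn_val q b)) (r1 (gmul y (sgn_val q b)))).
Proof. reflexivity. Qed.

Lemma pt_coset c c' z z' : valid_coset (X:=Y) c -> same_coset c c' ->
  gp_sub X (fst (r2 c)) (near c z) -> gp_sub X (fst (r2 c')) (near c' z') ->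
  fst (r2 c') = fst (r2 c) /\ gp_sub X (fst (r2 c)) (gmul (ginv (pt c z)) (pt c' z')).
Proof.
  intros Hc Hs H1 H2. pose proof (Hr2w Hc Hs) as [Hf Hsub]. pose proof (Hr2v Hc) as Hv.
  split; [symmetry; auto|]. rewrite <- Hf in H2. unfold pt. rewrite ginv_mul, gmul_assocr.
  apply subM; [exact Hv| |].
  - apply subV; [exact Hv|exact H1].
  - rewrite <- gmul_assocr. apply subM; [exact Hv|exact Hsub|exact H2].
Qed.

Lemma sc_step j y z : gp_sub Y j z -> same_coset (X:=Y) (j, y) (j, gmul y z).
Proof. intro H. split; simpl; auto. now rewrite mulVK. Qed.

Lemma glue_step A w c z y' j' q' b' :
  valid_coset c -> same_coset c (j', y') -> y' = gmul (snd c) z -> gp_sub Y (fst c) z ->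
  gp_sub X (fst (r2 c)) w -> gp_sub Y j' q' -> 2 * M <= K ->
  exists w', gp_sub X (fst (r2 c)) w' /\
    E (A ++ [(LP (fst (r2 c)) w, true)] ++ sw (geo SX (pt c z) (r1 y')) ++ conn y' (LP j' q', b'))
      (A ++ [(LP (fst (r2 c)) w', true)] ++ sw (geo SX (pt (j', y') (sgn_val q' b')) (r1 (gmul y' (sgn_val q' b'))))).
Proof.
  intros Hc Hs Hy Hz Hw Hq' HK.
  pose proof (Hr2v Hc) as Hv.
  assert (Hc' : valid_coset (X:=Y) (j', y')) by (eapply same_coset_valid; eauto).
  destruct (@near_ok c z Hc Hz) as [Hn1 Hd1].
  destruct (@near_ok (j', y') gone Hc' (subY1 Hc')) as [Hn2 Hd2].
  destruct (@near_ok (j', y') (sgn_val q' b') Hc' (@sgn_sub Y j' q' b' Hc' Hq')) as [Hn3 Hd3].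
  destruct (@pt_coset c (j', y') z gone Hc Hs Hn1 Hn2) as [Hk Hsub].
  simpl in Hd2. rewrite gmul_1r in Hd2. rewrite <- Hy in Hd1.
  set (k := fst (r2 c)) in *.
  set (S := sw (geo SX (pt c z) (r1 y')) ++ sw (geo SX (r1 y') (pt (j', y') gone))).
  assert (HS : sred SX K (M + M) S).
  { apply sred_app; apply sred_geo; auto. apply dist_sym, dist_lt_le; auto. apply dist_lt_le; auto. }
  assert (HpS : phi S = gmul (ginv (pt c z)) (pt (j', y') gone)).
  { unfold S. rewrite phi_app, !phi_geo. gsimpl. reflexivity. }
  set (x2 := gmul (ginv (near (j', y') gone)) (near (j', y') (sgn_val q' b'))).
  assert (Hx2 : gp_sub X k x2). { unfold x2. rewrite Hk in Hn2, Hn3. apply subM; auto. apply subV; auto. }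
  exists (gmul w (gmul (phi S) x2)). split.
  { apply subM; auto. apply subM; auto. rewrite HpS; auto. }
  rewrite conn_LP_eq. rewrite Hk. fold k. fold x2.
  set (B := sw (geo SX (pt (j', y') (sgn_val q' b')) (r1 (gmul y' (sgn_val q' b'))))).
  replace (A ++ [(LP k w, true)] ++ sw (geo SX (pt c z) (r1 y')) ++
      sw (geo SX (r1 y') (pt (j', y') gone)) ++ [(LP k x2, true)] ++ B)
    with (A ++ ([(LP k w, true)] ++ S ++ [(LP k x2, true)]) ++ B)
    by (unfold S; rewrite <- !app_assoc; reflexivity).
  apply cq_ctx. apply glue with (k := M + M); auto. lia. rewrite HpS; auto.
Qed.
Hypothesis HK_T : 2 * cb mT <= K.
Hypothesis HK_R : lR * cb mR <= K.
Hypothesis HK_RR : 2 * M + (L * mR + C) <= K.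

Lemma sredA c : valid_coset (X:=Y) c -> sred SX K M (sw (geo SX (r1 (snd c)) (pt c gone))).
Proof.
  intro Hc. destruct (@near_ok c gone Hc (subY1 Hc)) as [_ Hd]. rewrite gmul_1r in Hd.
  apply sred_geo; auto. apply dist_lt_le; auto.
Qed.

Lemma sredB c z : valid_coset (X:=Y) c -> gp_sub Y (fst c) z ->
  sred SX K M (sw (geo SX (pt c z) (r1 (gmul (snd c) z)))).
Proof.
  intros Hc Hz. destruct (@near_ok c z Hc Hz) as [_ Hd].
  apply sred_geo; auto. apply dist_sym, dist_lt_le; auto.
Qed.

Lemma RY_phi r : In r RY -> phi r = gone.
Proof.
  intro H. destruct HY as [_ [Hv Hiff]]. apply Hiff. apply Hv; auto.
  pose proof (@cq_rel _ (valid_letter T) (fun r => In r RY \/ table_rel r) [] [] r (or_introl H)).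
  now rewrite app_nil_r in H0.
Qed.

Lemma cancel_case y a b : valid_letter T a ->
  E (conn y (a, b) ++ conn (gmul y (sgn_val (letter_val a) b)) (a, negb b)) [].
Proof.
  intro Ha.
  assert (Hph : phi (conn y (a, b) ++ conn (gmul y (sgn_val (letter_val a) b)) (a, negb b)) = gone).
  { rewrite phi_app, !phi_conn, sgn_negb. gsimpl. reflexivity. }
  destruct a as [t | j q].
  - apply (@sred_loop X SX K (cb mT + cb mT)); auto; [|unfold cb in *; lia].
    apply sred_app; apply sred_conn; auto; try (apply HmT; exact Ha); unfold cb in *; lia.
  - destruct Ha as [Hj Hq]. rewrite conn_LP_eq at 1. simpl letter_val in *.
    assert (Hc : valid_coset (X:=Y) (j, y)) by exact Hj.
    destruct (@near_ok (j, y) gone Hc (subY1 Hj)) as [Hn1 _].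
    destruct (@near_ok (j, y) (sgn_val q b) Hc (@sgn_sub Y j q b Hj Hq)) as [Hn2 _].
    pose proof (Hr2v Hc) as Hv.
    destruct (@glue_step (sw (geo SX (r1 y) (pt (j, y) gone)))
       (gmul (ginv (near (j, y) gone)) (near (j, y) (sgn_val q b))) (j, y) (sgn_val q b)
       (gmul y (sgn_val q b)) j q (negb b) Hc (@sc_step j y (sgn_val q b) (@sgn_sub Y j q b Hj Hq)) eq_refl
       (@sgn_sub Y j q b Hj Hq)) as [w' [Hw' HE]]; auto.
    { apply subM; auto. apply subV; auto. }
    { unfold cb in *; lia. }
    rewrite <- !app_assoc. eapply cq_trans. exact HE.
    apply (@sred_loopP X SX K M M); auto.
    + apply (sredA Hc).
    + assert (Hc' : valid_coset (X:=Y) (j, gmul y (sgn_val q b))) by exact Hj.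
      apply (@sredB (j, gmul y (sgn_val q b)) _ Hc'). simpl. apply sgn_sub; auto.
    + unfold cb in *; lia.
    + rewrite <- (E_phi HE). rewrite <- Hph, !conn_LP_eq, <- ?app_assoc. reflexivity.
Qed.
Lemma table_case y r : table_rel (X:=Y) r -> E (theta y r) [].
Proof.
  intros [j [p [q [Hj [Hp [Hq ->]]]]]].
  assert (Hph : phi (theta y [(LP j p, true); (LP j q, true); (LP j (gmul p q), false)]) = gone).
  { rewrite phi_theta. simpl. gsimpl. reflexivity. }
  set (y1 := gmul y p). set (y2 := gmul y1 q).
  assert (Hc : valid_coset (X:=Y) (j, y)) by exact Hj.
  assert (Hc1 : valid_coset (X:=Y) (j, y1)) by exact Hj.
  assert (Hc2 : valid_coset (X:=Y) (j, y2)) by exact Hj.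
  assert (Hpq : gp_sub Y j (gmul p q)) by (apply subYM; auto).
  assert (Es : theta y [(LP j p, true); (LP j q, true); (LP j (gmul p q), false)] =
     sw (geo SX (r1 y) (pt (j, y) gone)) ++
     [(LP (fst (r2 (j, y))) (gmul (ginv (near (j, y) gone)) (near (j, y) p)), true)] ++
     sw (geo SX (pt (j, y) p) (r1 y1)) ++ conn y1 (LP j q, true) ++ conn y2 (LP j (gmul p q), false)).
  { simpl. rewrite app_nil_r, conn_LP_eq. simpl. rewrite <- !app_assoc. reflexivity. }
  rewrite Es in *. clear Es.
  destruct (@near_ok (j, y) gone Hc (subY1 Hj)) as [Hn1 _].
  destruct (@near_ok (j, y) p Hc Hp) as [Hn2 _].
  pose proof (Hr2v Hc) as Hv.
  destruct (@glue_step (sw (geo SX (r1 y) (pt (j, y) gone)))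
       (gmul (ginv (near (j, y) gone)) (near (j, y) p)) (j, y) p y1 j q true Hc
       (@sc_step j y p Hp) eq_refl Hp) as [w1 [Hw1 HE1]]; auto.
  { apply subM; auto. apply subV; auto. }
  { unfold cb in *; lia. }
  pose proof (Hr2w Hc (@sc_step j y p Hp)) as [Hk1 _]. simpl in Hk1. fold y1 in Hk1.
  destruct (@glue_step (sw (geo SX (r1 y) (pt (j, y) gone))) w1 (j, y1) q y2 j (gmul p q) false Hc1
       (@sc_step j y1 q Hq) eq_refl Hq) as [w2 [Hw2 HE2]]; auto.
  { simpl. rewrite <- Hk1. exact Hw1. }
  { unfold cb in *; lia. }
  simpl sgn_val in HE1. rewrite <- Hk1 in HE2, Hw2. fold y2 in HE1.
  assert (HE : E (sw (geo SX (r1 y) (pt (j, y) gone)) ++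
     [(LP (fst (r2 (j, y))) (gmul (ginv (near (j, y) gone)) (near (j, y) p)), true)] ++
     sw (geo SX (pt (j, y) p) (r1 y1)) ++ conn y1 (LP j q, true) ++ conn y2 (LP j (gmul p q), false))
     (sw (geo SX (r1 y) (pt (j, y) gone)) ++ [(LP (fst (r2 (j, y))) w2, true)] ++
      sw (geo SX (pt (j, y2) (sgn_val (gmul p q) false)) (r1 (gmul y2 (sgn_val (gmul p q) false)))))).
  { eapply cq_trans; [|exact HE2].
    replace (sw (geo SX (r1 y) (pt (j, y) gone)) ++
     [(LP (fst (r2 (j, y))) (gmul (ginv (near (j, y) gone)) (near (j, y) p)), true)] ++
     sw (geo SX (pt (j, y) p) (r1 y1)) ++ conn y1 (LP j q, true) ++ conn y2 (LP j (gmul p q), false))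
     with ((sw (geo SX (r1 y) (pt (j, y) gone)) ++
     [(LP (fst (r2 (j, y))) (gmul (ginv (near (j, y) gone)) (near (j, y) p)), true)] ++
     sw (geo SX (pt (j, y) p) (r1 y1)) ++ conn y1 (LP j q, true)) ++ conn y2 (LP j (gmul p q), false))
     by (rewrite <- !app_assoc; reflexivity).
    eapply cq_trans. apply cq_r. exact HE1.
    rewrite <- !app_assoc. apply cq_refl. }
  eapply cq_trans. exact HE.
  apply (@sred_loopP X SX K M M); auto.
  - apply (sredA Hc).
  - apply (@sredB (j, y2) _ Hc2). exact (@sgn_sub Y j (gmul p q) false Hj Hpq).
  - unfold cb in *; lia.
  - rewrite <- (E_phi HE). exact Hph.
Qed.

Lemma RY_case y r : In r RY -> E (theta y r) [].
Proof.
  intro H. destruct (@HmR r H) as [Hl Hb].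
  apply (@sred_loop X SX K (lR * cb mR)); auto.
  - eapply sred_mono.
    + apply (@sred_theta r mR y); auto. destruct HY as [_ [Hv _]]. apply Hv; auto.
    + apply Nat.mul_le_mono_r; auto.
  - rewrite phi_theta, (@RY_phi r H). gsimpl. reflexivity.
Qed.

Lemma lemmaA U V : EY U V -> forall y, E (theta y U) (theta y V).
Proof.
  induction 1; intro y.
  - apply cq_refl.
  - apply cq_sym; auto.
  - eapply cq_trans; eauto.
  - rewrite !theta_app. apply cq_l. simpl.
    rewrite (@theta_eq (gmul (gmul (gmul y (phi u)) (sgn_val (letter_val a) b)) (sgn_val (letter_val a) (negb b)))
       (gmul y (phi u))). 2:{ rewrite sgn_negb. gsimpl. reflexivity. }
    rewrite app_assoc. rewrite <- (app_nil_l (theta (gmul y (phi u)) v)) at 2.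
    apply cq_r. apply cancel_case. exact H.
  - rewrite !theta_app. apply cq_l.
    assert (Hr : phi r = gone).
    { destruct H as [H|[j [p [q [_ [_ [_ ->]]]]]]]. apply RY_phi; auto. simpl. gsimpl. reflexivity. }
    rewrite (@theta_eq (gmul (gmul y (phi u)) (phi r)) (gmul y (phi u))) by (rewrite Hr; gsimpl; reflexivity).
    rewrite <- (app_nil_l (theta (gmul y (phi u)) v)) at 2. apply cq_r.
    destruct H as [H|H]. apply RY_case; auto. apply table_case; auto.
Qed.
Lemma lemmaA1 W y : valid_word T W -> phi W = gone -> E (theta y W) [].
Proof.
  intros Hv Hp. destruct HY as [_ [_ Hiff]]. apply (lemmaA (proj1 (Hiff W Hv) Hp) y).
Qed.

Lemma lemmaA2 W W' y : valid_word T W -> valid_word T W' -> phi W = phi W' ->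
  E (theta y W) (theta y W').
Proof.
  intros Hv Hv' Hp.
  assert (H1 : E (theta y W ++ theta (gmul y (phi W')) (inv_word W')) []).
  { rewrite <- Hp, <- theta_app. apply lemmaA1. apply valid_app; auto. apply valid_inv_word; auto.
    rewrite phi_app, phi_inv_word, Hp. gsimpl. reflexivity. }
  assert (H2 : E (theta (gmul y (phi W')) (inv_word W') ++ theta y W') []).
  { rewrite (@theta_eq y (gmul (gmul y (phi W')) (phi (inv_word W'))) W').
    2:{ rewrite phi_inv_word. gsimpl. reflexivity. }
    rewrite <- theta_app. apply lemmaA1. apply valid_app; auto. apply valid_inv_word; auto.
    rewrite phi_app, phi_inv_word. gsimpl. reflexivity. }
  eapply cq_trans. rewrite <- (app_nil_r (theta y W)) at 1. apply cq_l. apply cq_sym. exact H2.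
  rewrite app_assoc. rewrite <- (app_nil_l (theta y W')) at 2. apply cq_r. exact H1.
Qed.

Definition yw (l : list (Y * bool)) : word Y := flat_map (fun sb => Wc (fst sb) (snd sb)) l.

Lemma yw_ok l : inS SY l -> valid_word T (yw l) /\ phi (yw l) = prod_list l /\ Ybnd mW (yw l) /\
  length (yw l) <= length l * lW.
Proof.
  induction l as [|[b s] l IH]; intro Hl.
  - simpl. repeat split; auto. apply valid_nil. intros a bb [].
  - assert (Hb : In b SY) by (eapply Hl; left; eauto).
    destruct IH as [H1 [H2 [H3 H4]]]. intros y b' H; eapply Hl; right; eauto.
    destruct (@HWc b s Hb) as [V1 V2]. destruct (@HWb b s Hb) as [B1 B2].
    simpl. change (flat_map (fun sb => Wc (fst sb) (snd sb)) l) with (yw l).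
    repeat split.
    + apply valid_app; auto.
    + rewrite phi_app, V2, H2. reflexivity.
    + intros a bb Hin. apply in_app_or in Hin as [Hin|Hin]; eauto.
    + rewrite length_app. lia.
Qed.

Definition ywd (h : Y) : word Y := pick [] (fun W => valid_word T W /\ phi W = h).

Lemma ywd_ok h : valid_word T (ywd h) /\ phi (ywd h) = h.
Proof. unfold ywd. apply pick_ok. destruct HY as [H _]. apply H. Qed.

Definition rho (g : X) : word X := sw (geo SX (r1 (f1 g)) g).

Lemma sred_rho g : sred SX K C (rho g).
Proof. apply sred_geo; auto. Qed.

Lemma phi_rho g : phi (rho g) = gmul (ginv (r1 (f1 g))) g.
Proof. apply phi_geo. Qed.

Definition sigma (g : X) : word X := theta (f1 gone) (ywd (gmul (ginv (f1 gone)) (f1 g))) ++ rho g.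
Hypothesis HK_W : 2 * M + (L * mW + C) <= K.
Hypothesis HK_S : (C + 1) + ((L * 1 + C) * lW * cb mW + C) <= K.
Hypothesis HK_P1 : (M * lW * cb mW + M) + C <= K.
Hypothesis HK_P2 : M + (M * lW * cb mW + C) <= K.

Lemma sred_theta_yw y l n : inS SY l -> length l <= n -> sred SX K (n * lW * cb mW) (theta y (yw l)).
Proof.
  intros Hl Hn. destruct (yw_ok Hl) as [H1 [H2 [H3 H4]]].
  eapply sred_mono. apply (@sred_theta (yw l) mW y); auto.
  apply Nat.mul_le_mono_r. eapply Nat.le_trans. exact H4. apply Nat.mul_le_mono_r. exact Hn.
Qed.

Lemma localS g s : In s SX -> exists V, valid_word T V /\ phi V = gmul (ginv (f1 g)) (f1 (gmul g s)) /\
  E (rho g ++ [(LS s, true)]) (theta (f1 g) V ++ rho (gmul g s)).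
Proof.
  intro Hs.
  destruct (geo_ok (f1 g) (f1 (gmul g s)) HSY) as [G1 [G2 G3]].
  set (l := geo SY (f1 g) (f1 (gmul g s))) in *.
  assert (Hd : dist_le SY (f1 g) (f1 (gmul g s)) (L * 1 + C)).
  { apply Hf1. exact (@dist_step X SX g s true 1 (@wl_gen X SX s true Hs)). }
  destruct (yw_ok G1) as [Y1 [Y2 [Y3 Y4]]].
  exists (yw l). split; auto. split. rewrite Y2; auto.
  apply (@sred_eq X SX K (C + 1) ((L * 1 + C) * lW * cb mW + C)); auto.
  - apply sred_app. apply sred_rho. apply (@sred_sw X SX K [(s, true)] 1).
    intros y b [E1|[]]; inversion E1; subst; auto. simpl; lia.
  - apply sred_app. apply sred_theta_yw; auto. apply sred_rho.
  - rewrite !phi_app, phi_theta, !phi_rho, Y2, G2. simpl. gsimpl. reflexivity.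
Qed.

Lemma localP g i p : i < gp_n X -> gp_sub X i p -> exists V, valid_word T V /\
  phi V = gmul (ginv (f1 g)) (f1 (gmul g p)) /\
  E (rho g ++ [(LP i p, true)]) (theta (f1 g) V ++ rho (gmul g p)).
Proof.
  intros Hi Hp.
  set (c := (i, g) : coset_rep X).
  assert (Hc : valid_coset c) by exact Hi.
  pose proof (Hf2v Hc) as Hfc.
  destruct (f2 c) as [j h] eqn:Ef2.
  destruct (@HfH c Hc gone (@sub1 X i Hi)) as [q0 [Hq0 Hd0]].
  destruct (@HfH c Hc p Hp) as [q1 [Hq1 Hd1]].
  rewrite Ef2 in Hq0, Hd0, Hq1, Hd1. simpl in Hq0, Hd0, Hq1, Hd1. rewrite gmul_1r in Hd0.
  unfold valid_coset in Hfc. simpl in Hfc.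
  set (x := gmul (ginv q0) q1).
  assert (Hx : gp_sub Y j x) by (unfold x; apply subYM; auto; apply subYV; auto).
  destruct (geo_ok (f1 g) (gmul h q0) HSY) as [G1 [G2 G3]].
  destruct (geo_ok (gmul h q1) (f1 (gmul g p)) HSY) as [G1' [G2' G3']].
  set (l1 := geo SY (f1 g) (gmul h q0)) in *.
  set (l2 := geo SY (gmul h q1) (f1 (gmul g p))) in *.
  destruct (yw_ok G1) as [Y1 [Y2 [Y3 Y4]]].
  destruct (yw_ok G1') as [Y1' [Y2' [Y3' Y4']]].
  set (V := yw l1 ++ [(LP j x, true)] ++ yw l2).
  assert (HV : valid_word T V).
  { apply valid_app; auto. apply valid_cons; auto. simpl; auto. }
  assert (HpV : phi V = gmul (ginv (f1 g)) (f1 (gmul g p))).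
  { unfold V. rewrite !phi_app, Y2, Y2'. simpl. rewrite G2, G2'. unfold x. gsimpl. reflexivity. }
  exists V. split; auto. split; auto.
  set (y1 := gmul h q0).
  set (c1 := (j, y1) : coset_rep Y).
  assert (Hc1 : valid_coset c1) by exact Hfc.
  assert (Ht : theta (f1 g) V = theta (f1 g) (yw l1) ++ conn y1 (LP j x, true) ++ theta (gmul h q1) (yw l2)).
  { unfold V. rewrite theta_app. f_equal. simpl.
    replace (gmul (f1 g) (phi (yw l1))) with y1 by (rewrite Y2, G2; unfold y1; gsimpl; reflexivity).
    f_equal. apply theta_eq. unfold y1, x. gsimpl. reflexivity. }
  rewrite Ht. rewrite conn_LP_eq. fold c1. simpl sgn_val.
  assert (Hs1 : same_coset (r2 c1) c).
  { assert (Hsc : same_coset (f2 c) c1) by (rewrite Ef2; apply sc_step; auto).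
    pose proof (Hr2w (Hf2v Hc) Hsc) as H1. pose proof (Hret2 Hc) as H2.
    exact (same_coset_trans (Hr2v Hc1) (same_coset_sym (Hr2v (Hf2v Hc)) H1) H2). }
  destruct Hs1 as [Hk Hsub]. simpl in Hk, Hsub.
  destruct (@near_ok c1 gone Hc1 (subY1 Hfc)) as [Hn1 _].
  destruct (@near_ok c1 x Hc1 Hx) as [Hn2 _].
  rewrite Hk in Hn1, Hn2.
  set (k := fst (r2 c1)) in *. rewrite Hk in Hsub |- *.
  set (U := theta (f1 g) (yw l1) ++ sw (geo SX (r1 y1) (pt c1 gone))).
  set (Wr := sw (geo SX (pt c1 x) (r1 (gmul y1 x))) ++ theta (gmul h q1) (yw l2) ++ rho (gmul g p)).
  set (xx := gmul (ginv (near c1 gone)) (near c1 x)).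
  assert (HU : sred SX K (M * lW * cb mW + M) U).
  { apply sred_app. apply sred_theta_yw; auto. apply G3. apply dist_lt_le; auto. apply (sredA Hc1). }
  assert (HW : sred SX K (M + (M * lW * cb mW + C)) Wr).
  { apply sred_app. apply (@sredB c1 x Hc1 Hx). apply sred_app. apply sred_theta_yw; auto.
    apply G3'. apply dist_sym. apply dist_lt_le; auto. apply sred_rho. }
  assert (HpU : phi U = gmul (ginv (r1 (f1 g))) (pt c1 gone)).
  { unfold U. rewrite phi_app, phi_theta, phi_geo, Y2, G2. gsimpl. reflexivity. }
  assert (HpW : phi Wr = gmul (ginv (pt c1 x)) (gmul g p)).
  { unfold Wr. rewrite !phi_app, phi_theta, phi_geo, phi_rho, Y2', G2'. unfold y1, x. gsimpl. reflexivity. }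
  set (e1 := gmul (ginv (phi U)) (phi (rho g))).
  assert (He1 : gp_sub X i e1).
  { unfold e1. rewrite HpU, phi_rho. unfold pt. gsimpl. apply subM; auto. apply subV; auto. }
  assert (He2 : gp_sub X i (phi Wr)).
  { rewrite HpW. unfold pt. gsimpl. apply subM; auto. apply subV; auto. rewrite <- gmul_assocr.
    apply subM; auto. }
  assert (L1 : E (rho g ++ [(LP i p, true)]) (U ++ [(LP i (gmul e1 p), true)])).
  { eapply cq_trans. apply cq_r. apply (@sred_eqP X SX K _ _ U (rho g) i HU (sred_rho g)); auto.
    rewrite <- app_assoc. apply cq_l. apply merge; auto. }
  assert (L2 : E ([(LP i xx, true)] ++ Wr) [(LP i (gmul xx (phi Wr)), true)]).
  { eapply cq_trans. apply cq_l. apply (@sred_close X SX K _ Wr i HW); auto. apply merge; auto.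
    unfold xx. apply subM; auto. apply subV; auto. }
  assert (HR : (theta (f1 g) (yw l1) ++ (sw (geo SX (r1 y1) (pt c1 gone)) ++ [(LP i xx, true)] ++
       sw (geo SX (pt c1 x) (r1 (gmul y1 x)))) ++ theta (gmul h q1) (yw l2)) ++ rho (gmul g p)
      = U ++ [(LP i xx, true)] ++ Wr) by (unfold U, Wr; rewrite <- !app_assoc; reflexivity).
  rewrite HR.
  assert (L3 : E (U ++ [(LP i xx, true)] ++ Wr) (U ++ [(LP i (gmul xx (phi Wr)), true)])) by (apply cq_l; exact L2).
  assert (Heq : gmul e1 p = gmul xx (phi Wr)).
  { pose proof (E_phi L1) as P1. pose proof (E_phi L3) as P3.
    assert (Hphi : phi (rho g ++ [(LP i p, true)]) = phi (U ++ [(LP i xx, true)] ++ Wr)).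
    { rewrite !phi_app, HpU, HpW, phi_rho. simpl. unfold xx, pt. gsimpl. reflexivity. }
    rewrite Hphi, P3 in P1.
    rewrite !phi_app in P1. simpl in P1. rewrite !gmul_1r in P1. apply mul_cancel_l in P1. auto. }
  eapply cq_trans. exact L1. rewrite Heq. apply cq_sym. exact L3.
Qed.
Lemma sigma_gen g a x V : valid_word T V -> phi V = gmul (ginv (f1 g)) (f1 (gmul g x)) ->
  E (rho g ++ [(a, true)]) (theta (f1 g) V ++ rho (gmul g x)) ->
  E (sigma g ++ [(a, true)]) (sigma (gmul g x)).
Proof.
  intros HV Hp HE. unfold sigma.
  destruct (ywd_ok (gmul (ginv (f1 gone)) (f1 g))) as [W1 W2].
  destruct (ywd_ok (gmul (ginv (f1 gone)) (f1 (gmul g x)))) as [W1' W2'].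
  rewrite <- app_assoc. eapply cq_trans. apply cq_l. exact HE.
  rewrite app_assoc. apply cq_r.
  rewrite <- (@theta_eq (gmul (f1 gone) (phi (ywd (gmul (ginv (f1 gone)) (f1 g))))) (f1 g) V).
  2:{ rewrite W2. gsimpl. reflexivity. }
  rewrite <- theta_app. apply lemmaA2; auto. apply valid_app; auto.
  rewrite phi_app, W2, W2', Hp. gsimpl. reflexivity.
Qed.

Lemma sigma_step_t g a : valid_letter SX a -> E (sigma g ++ [(a, true)]) (sigma (gmul g (letter_val a))).
Proof.
  intro Ha. destruct a as [s | i p]; simpl in Ha.
  - destruct (@localS g s Ha) as [V [H1 [H2 H3]]]. eapply sigma_gen; eauto.
  - destruct Ha as [Hi Hp]. destruct (@localP g i p Hi Hp) as [V [H1 [H2 H3]]]. eapply sigma_gen; eauto.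
Qed.

Lemma sigma_step g a b : valid_letter SX a ->
  E (sigma g ++ [(a, b)]) (sigma (gmul g (sgn_val (letter_val a) b))).
Proof.
  intro Ha. destruct b; simpl. apply sigma_step_t; auto.
  set (g' := gmul g (ginv (letter_val a))).
  assert (Hg : sigma g = sigma (gmul g' (letter_val a))) by (unfold g'; gsimpl; reflexivity).
  rewrite Hg. eapply cq_trans. apply cq_r. apply cq_sym. apply sigma_step_t; auto.
  rewrite <- app_assoc. simpl. rewrite <- (app_nil_r (sigma g')) at 2. apply cq_l.
  apply (@cq_cancel _ _ _ [] [] a true). auto.
Qed.

Lemma sigma_word w : valid_word SX w -> forall g, E (sigma g ++ w) (sigma (gmul g (phi w))).
Proof.
  induction w as [|[a b] w IH]; intros Hw g; simpl.
  - rewrite app_nil_r, gmul_1r. apply cq_refl.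
  - change ((a, b) :: w) with ([(a, b)] ++ w). rewrite app_assoc.
    eapply cq_trans. apply cq_r. apply sigma_step. eapply Hw; left; eauto.
    rewrite gmul_assoc. apply IH. intros a' b' H; eapply Hw; right; eauto.
Qed.

Lemma valid_sigma g : valid_word SX (sigma g).
Proof.
  unfold sigma. apply valid_app. apply valid_theta. apply ywd_ok. apply valid_geo; auto.
Qed.

Lemma completeness w : valid_word SX w -> phi w = gone -> E w [].
Proof.
  intros Hw Hp. pose proof (sigma_word Hw gone) as H. rewrite Hp, gmul_1l in H.
  apply cq_trans with (inv_word (sigma gone) ++ sigma gone ++ w).
  - rewrite app_assoc. rewrite <- (app_nil_l w) at 1. apply cq_r. apply cq_sym. apply cq_cancel_word'.
    apply valid_sigma.
  - eapply cq_trans. apply cq_l. exact H. apply cq_cancel_word'. apply valid_sigma.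
Qed.

End Main.
Lemma fin_words (G : Group) (S : list G) k : exists LL : list (list (G * bool)),
  forall l, inS S l -> length l <= k -> In l LL.
Proof.
  induction k as [|k [LL IH]].
  - exists [[]]. intros l _ Hl. destruct l; simpl in *; auto. lia.
  - exists ([] :: flat_map (fun l => flat_map (fun s => [(s, true) :: l; (s, false) :: l]) S) LL).
    intros l Hs Hl. destruct l as [|[s b] l]; [left; auto|right].
    apply in_flat_map. exists l. split.
    + apply IH. intros y b' H; eapply Hs; right; eauto. simpl in Hl; lia.
    + apply in_flat_map. exists s. split. eapply Hs; left; eauto. destruct b; simpl; auto.
Qed.

Lemma fin_Rset (X : GroupPair) (SX : list X) K : exists R, forall r, In r R <-> Rset SX K r.
Proof.
  destruct (@fin_words X SX K) as [LL HLL].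
  destruct (fin_filter (flat_map (fun l => map (fun i => sw l ++ [(LP i (prod_list l), false)]) (seq 0 (gp_n X))) LL)
     (Rset SX K)) as [R HR].
  exists R. intro r. rewrite HR. split; [tauto|]. intro H. split; auto.
  destruct H as [l [i [H1 [H2 [H3 [H4 ->]]]]]]. apply in_flat_map. exists l. split; auto.
  apply in_map_iff. exists i. split; auto. apply in_seq. lia.
Qed.

Lemma Ybnd_mono (Y : GroupPair) (SY : list Y) m m' W : Ybnd Y SY m W -> m <= m' -> Ybnd Y SY m' W.
Proof. intros H Hm a b Hin. eapply wl_mono; eauto. Qed.

Lemma Ybnd_exists (Y : GroupPair) (SY : list Y) W : generates SY -> exists m, Ybnd Y SY m W.
Proof.
  intro HS. destruct (@unif_bound _ W (fun ab n => word_len_le SY (letter_val (fst ab)) n)) as [m Hm].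
  - intros x n m H Hnm. eapply wl_mono; eauto.
  - intros x _. apply HS.
  - exists m. intros a b Hin. exact (Hm (a, b) Hin).
Qed.

Theorem theorem4p12 (X Y : GroupPair) :
  quasi_retract X Y -> rel_fin_presented Y -> rel_fin_presented X.
Proof.
  intros [SX [SY [L [C [M [f1 [f2 [r1 [r2 [HSX [HSY [HL [Hf [Hr [Hret1 Hret2]]]]]]]]]]]]]]] [T [RY HY]].
  destruct Hf as [Hf1 [Hf2v [_ HfH0]]]. destruct Hr as [Hr1 [Hr2v [Hr2w HrH0]]].
  assert (HfH : forall c, valid_coset (X:=X) c ->
     (forall p, gp_sub X (fst c) p ->
        exists q, gp_sub Y (fst (f2 c)) q /\
          dist_lt SY (f1 (gmul (snd c) p)) (gmul (snd (f2 c)) q) M)) by (intros c Hc; exact (proj1 (HfH0 c Hc))).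
  assert (HrH : forall c, valid_coset (X:=Y) c ->
     (forall q, gp_sub Y (fst c) q ->
        exists p, gp_sub X (fst (r2 c)) p /\
          dist_lt SX (r1 (gmul (snd c) q)) (gmul (snd (r2 c)) p) M)) by (intros c Hc; exact (proj1 (HrH0 c Hc))).
  set (Wc := fun (b : Y) (s : bool) => pick [] (fun W => valid_word T W /\ phi W = sgn_val b s)).
  assert (HWc : forall b s, In b SY -> valid_word T (Wc b s) /\ phi (Wc b s) = sgn_val b s).
  { intros b s _. unfold Wc. apply pick_ok. destruct HY as [H _]. apply H. }
  destruct (@unif_bound _ SY (fun b n => forall s, length (Wc b s) <= n /\ Ybnd Y SY n (Wc b s))) as [nW HnW].
  { intros b n m H Hnm s. destruct (H s) as [H1 H2]. split. lia. eapply Ybnd_mono; eauto. }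
  { intros b _. destruct (@Ybnd_exists Y SY (Wc b true) HSY) as [m1 Hm1].
    destruct (@Ybnd_exists Y SY (Wc b false) HSY) as [m2 Hm2].
    exists (length (Wc b true) + length (Wc b false) + m1 + m2). intros [|]; split; try lia;
    eapply Ybnd_mono; eauto; lia. }
  destruct (@unif_bound _ T (fun t n => word_len_le SY t n)) as [mT HmT].
  { intros x n m H Hnm. eapply wl_mono; eauto. }
  { intros x _. apply HSY. }
  destruct (@unif_bound _ RY (fun r n => length r <= n /\ Ybnd Y SY n r)) as [nR HnR].
  { intros r n m [H1 H2] Hnm. split. lia. eapply Ybnd_mono; eauto. }
  { intros r _. destruct (@Ybnd_exists Y SY r HSY) as [m Hm]. exists (length r + m). split. lia.
    eapply Ybnd_mono; eauto; lia. }
  set (K := 2 * cb L C M mT + nR * cb L C M nR + (2 * M + (L * nR + C)) + (2 * M + (L * nW + C)) +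
     (C + 1 + ((L * 1 + C) * nW * cb L C M nW + C)) + (M * nW * cb L C M nW + M + C) +
     (M + (M * nW * cb L C M nW + C))).
  destruct (@fin_Rset X SX K) as [R HR].
  exists SX, R. split; [|split].
  - intro g. destruct (HSX g) as [n [l [H1 [H2 H3]]]]. exists (sw l). split.
    apply valid_sw; auto. rewrite phi_sw; auto.
  - intros r Hr. apply HR in Hr. apply (@RelX_valid X SX K r). left; auto.
  - intros w Hw. split.
    + intro Hp. eapply cq_mono; [| refine (@completeness X Y SX SY L C M f1 f2 r1 r2 HSX HSY Hf1 Hf2v HfH
         Hr1 Hr2v Hr2w HrH Hret1 Hret2 T RY HY Wc nW nW mT nR nR HWc _ HmT HnR K _ _ _ _ _ _ _ w Hw Hp)].
      1: { intros r [H|H]; [left; apply HR; auto | right; auto]. }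
      1: { intros b s Hb. apply HnW; auto. }
      all: unfold K; lia.
    + intro H. apply (@cq_mono _ _ _ (RelX SX K)) in H.
      * apply E_phi in H. exact H.
      * intros r [H'|H']; [left; apply HR; auto | right; auto].
Qed.
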